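(* (Soundness.) For every formula $\phi$ of the language $\Phi$: if $\vdash\phi$, then $h\Vdash\phi$ for every history $h$ of every regular epistemic transition system.
   Context: Fix a set of agents $\mathcal{A}$. A coalition is a subset of $\mathcal{A}$. The language $\Phi$ is given by $\phi ::= p \mid \neg\phi \mid \phi\to\phi \mid \mathsf{K}_C\phi \mid \mathsf{H}_C\phi$, where $p$ ranges over propositional variables and $C\subseteq\mathcal{A}$; $\bot,\top$ are defined as usual. Axioms: all propositional tautologies of $\Phi$ and (1) Truth: $\mathsf{K}_C\phi\to\phi$; (2) Negative Introspection: $\neg\mathsf{K}_C\phi\to\mathsf{K}_C\neg\mathsf{K}_C\phi$; (3) Distributivity: $\mathsf{K}_C(\phi\to\psi)\to(\mathsf{K}_C\phi\to\mathsf{K}_C\psi)$; (4) Monotonicity: $\mathsf{K}_C\phi\to\mathsf{K}_D\phi$ if $C\subseteq D$; (5) Strategic Positive Introspection: $\mathsf{H}_C\phi\to\mathsf{K}_C\mathsf{H}_C\phi$; (6) Cooperation: $\mathsf{H}_C(\phi\to\psi)\to(\mathsf{H}_D\phi\to\mathsf{H}_{C\cup D}\psi)$ where $C\cap D=\varnothing$; (7) Empty Coalition: $\mathsf{K}_\varnothing\phi\to\mathsf{H}_\varnothing\phi$; (8) Perfect Recall: $\mathsf{H}_D\phi\to\mathsf{H}_D\mathsf{K}_C\phi$ where $D\subseteq C\neq\varnothing$; (9) Unachievability of Falsehood: $\neg\mathsf{H}_C\bot$. $\vdash\phi$ means $\phi$ is derivable from the axioms using Necessitation ($\phi/\mathsf{K}_C\phi$),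 Strategic Necessitation ($\phi/\mathsf{H}_C\phi$) and Modus Ponens. An epistemic transition system is a tuple $(W,\{\sim_a\}_{a\in\mathcal{A}},V,M,\pi)$ with $W$ a set of states, each $\sim_a$ an equivalence relation on $W$, $V$ a nonempty set (domain of choices), $M\subseteq W\times V^{\mathcal{A}}\times W$, and $\pi$ mapping propositional variables to subsets of $W$. It is regular if for every $w\in W$ and $\mathbf{s}\in V^{\mathcal{A}}$ there is $w'$ with $(w,\mathbf{s},w')\in M$. A strategy profile of coalition $C$ is an element of $V^C$; for profiles $\mathbf{s}_1\in V^{C_1},\mathbf{s}_2\in V^{C_2}$ and $C\subseteq C_1\cap C_2$, $\mathbf{s}_1=_C\mathbf{s}_2$ means $(\mathbf{s}_1)_a=(\mathbf{s}_2)_a$ for all $a\in C$. $w\sim_C w'$ means $w\sim_a w'$ for all $a\in C$. A history is a sequence $(w_0,\mathbf{s}_1,w_1,\dots,\mathbf{s}_n,w_n)$, $n\ge0$, with $w_i\in W$, $\mathbf{s}_i\in V^{\mathcal{A}}$, $(w_i,\mathbf{s}_{i+1},w_{i+1})\in M$ for $i<n$; $hd(h)$ is its last element and $h::\mathbf{s}::w$ denotes extension by $\mathbf{s},w$. For histories $h=(w_0,\mathbf{s}_1,\dots,w_n)$, $h'=(w'_0,\mathbf{s}'_1,\dots,w'_m)$ and agent $a$, $h\approx_a h'$ iff $n=m$, $w_i\sim_a w'_i$ for all $i$, and $(\mathbf{s}_i)_a=(\mathbf{s}'_i)_a$ for all $i$; $h\approx_C h'$ iff $h\approx_a h'$ for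 all $a\in C$ (so $\approx_\varnothing$ relates any two histories). Satisfaction: $h\Vdash p$ iff $hd(h)\in\pi(p)$; Boolean clauses as usual; $h\Vdash\mathsf{K}_C\phi$ iff $h'\Vdash\phi$ for every history $h'$ with $h\approx_C h'$; $h\Vdash\mathsf{H}_C\phi$ iff there is $\mathbf{s}\in V^C$ such that for every history $h'::\mathbf{s}'::w'$ with $h\approx_C h'$ and $\mathbf{s}=_C\mathbf{s}'$ we have $h'::\mathbf{s}'::w'\Vdash\phi$. *)

(* Defs.v *)
From mathcomp Require Import all_boot.
From mathcomp Require Import boolp classical_sets.

Set Implicit Arguments.
Unset Strict Implicit.
Unset Printing Implicit Defensive.

Local Open Scope classical_set_scope.

Inductive formula (Agent : Type) : Type :=
| Var : nat -> formula Agent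
| Neg : formula Agent -> formula Agent
| Imp : formula Agent -> formula Agent -> formula Agent
| Kn  : set Agent -> formula Agent -> formula Agent
| Hw  : set Agent -> formula Agent -> formula Agent.

Arguments Var {Agent}.

Definition Bot {Agent : Type} : formula Agent := Neg (Imp (Var 0) (Var 0)).

Fixpoint peval {Agent : Type} (v : formula Agent -> bool) (f : formula Agent)
  : bool :=
  match f with
  | Var _ => v f
  | Neg g => ~~ peval v g
  | Imp g k => peval v g ==> peval v k
  | Kn _ _ => v f
  | Hw _ _ => v f
  end.

Definition tautology {Agent : Type} (f : formula Agent) : Prop :=
  forall v : formula Agent -> bool, peval v f.

Inductive derivable {Agent : Type} : formula Agent -> Prop :=
| D_taut f : tautology f -> derivable f
| D_truth C f : derivable (Imp (Kn C f) f)
| D_negintro C f : derivable (Imp (Neg (Kn C f)) (Kn C (Neg (Kn C f))))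
| D_distr C f g :
    derivable (Imp (Kn C (Imp f g)) (Imp (Kn C f) (Kn C g)))
| D_mono C D f : C `<=` D -> derivable (Imp (Kn C f) (Kn D f))
| D_spi C f : derivable (Imp (Hw C f) (Kn C (Hw C f)))
| D_coop C D f g : C `&` D = set0 ->
    derivable (Imp (Hw C (Imp f g)) (Imp (Hw D f) (Hw (C `|` D) g)))
| D_empty f : derivable (Imp (Kn set0 f) (Hw set0 f))
| D_recall C D f : D `<=` C -> C <> set0 ->
    derivable (Imp (Hw D f) (Hw D (Kn C f)))
| D_unach C : derivable (Neg (Hw C Bot))
| D_nec C f : derivable f -> derivable (Kn C f)
| D_snec C f : derivable f -> derivable (Hw C f)
| D_mp f g : derivable (Imp f g) -> derivable f -> derivable g.

Record ETS (Agent : Type) := {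
  W : Type;
  sim : Agent -> W -> W -> Prop;
  sim_refl : forall a w, sim a w w;
  sim_sym : forall a w w', sim a w w' -> sim a w' w;
  sim_trans : forall a w1 w2 w3, sim a w1 w2 -> sim a w2 w3 -> sim a w1 w3;
  V : Type;
  V_nonempty : inhabited V;
  M : W -> (Agent -> V) -> W -> Prop;
  pi : nat -> set W
}.

Arguments W {Agent}.
Arguments sim {Agent}.
Arguments V {Agent}.
Arguments M {Agent}.
Arguments pi {Agent}.

Definition regular {Agent : Type} (E : ETS Agent) : Prop :=
  forall (w : W E) (s : Agent -> V E), exists w' : W E, M E w s w'.

Section Histories.
Variables (Agent : Type) (E : ETS Agent).

(* Raw sequences (w0, s1, w1, ..., sn, wn), built by right extension. *)
Inductive hist : Type :=
| HInit : W E -> hist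
| HExt : hist -> (Agent -> V E) -> W E -> hist.

Definition hd (h : hist) : W E :=
  match h with HInit w => w | HExt _ _ w => w end.

Fixpoint is_history (h : hist) : Prop :=
  match h with
  | HInit _ => True
  | HExt h' s w => is_history h' /\ M E (hd h') s w
  end.

Fixpoint hequiv_a (a : Agent) (h h' : hist) : Prop :=
  match h, h' with
  | HInit w, HInit w' => sim E a w w'
  | HExt g s w, HExt g' s' w' => hequiv_a a g g' /\ s a = s' a /\ sim E a w w'
  | _, _ => False
  end.

Definition hequiv (C : set Agent) (h h' : hist) : Prop :=
  forall a, C a -> hequiv_a a h h'.

Definition profile (C : set Agent) : Type := {a : Agent | C a} -> V E.

Definition prof_agree (C : set Agent) (s : profile C) (s' : Agent -> V E)
  : Prop :=
  forall a (Ha : C a), s (exist _ a Ha) = s' a.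

Fixpoint sat (h : hist) (f : formula Agent) : Prop :=
  match f with
  | Var p => pi E p (hd h)
  | Neg g => ~ sat h g
  | Imp g k => sat h g -> sat h k
  | Kn C g => forall h', is_history h' -> hequiv C h h' -> sat h' g
  | Hw C g => exists s : profile C,
      forall h' s' w', is_history (HExt h' s' w') -> hequiv C h h' ->
        prof_agree s s' -> sat (HExt h' s' w') g
  end.

End Histories.

Arguments HInit {Agent E}.
Arguments HExt {Agent E}.

(* Main.v *)
Require Import Defs.
From mathcomp Require Import all_boot.
From mathcomp Require Import boolp classical_sets.

Set Implicit Arguments.
Unset Strict Implicit.

Local Open Scope classical_set_scope.
Section S.
Variables (Agent : Type) (E : ETS Agent).

Lemma heqa_refl a (h : hist E) : hequiv_a a h h.
Proof. elim: h => [w|g IH s w] /=; [exact: sim_refl | split => //; split=> //; exact: sim_refl]. Qed.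

Lemma heqa_sym a (h h' : hist E) : hequiv_a a h h' -> hequiv_a a h' h.
Proof.
elim: h h' => [w|g IH s w] [w'|g' s' w'] //=; first exact: sim_sym.
move=> [H1 [H2 H3]]; split; [exact: IH|split; [by []|exact: sim_sym]].
Qed.

Lemma heqa_trans a (h1 h2 h3 : hist E) :
  hequiv_a a h1 h2 -> hequiv_a a h2 h3 -> hequiv_a a h1 h3.
Proof.
elim: h1 h2 h3 => [w|g IH s w] [w2|g2 s2 w2] [w3|g3 s3 w3] //=.
  exact: sim_trans.
move=> [H1 [H2 H3]] [K1 [K2 K3]]; split; first exact: IH H1 K1.
split; [by rewrite H2 K2 | exact: sim_trans H3 K3].
Qed.

Lemma heq_refl C (h : hist E) : hequiv C h h.
Proof. by move=> a _; exact: heqa_refl. Qed.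
Lemma heq_sym C (h h' : hist E) : hequiv C h h' -> hequiv C h' h.
Proof. by move=> H a Ha; apply: heqa_sym; apply: H. Qed.
Lemma heq_trans C (h1 h2 h3 : hist E) :
  hequiv C h1 h2 -> hequiv C h2 h3 -> hequiv C h1 h3.
Proof. by move=> H K a Ha; apply: heqa_trans (H a Ha) (K a Ha). Qed.
Lemma heq_sub C D (h h' : hist E) : C `<=` D -> hequiv D h h' -> hequiv C h h'.
Proof. by move=> sub H a Ha; apply: H; apply: sub. Qed.

Lemma peval_sat (h : hist E) (f : formula Agent) :
  peval (fun g => `[< sat h g >]) f <-> sat h f.
Proof.
elim: f => [n|g IH|g IHg k IHk|C g _|C g _] /=.
- by split => [/asboolP|?]; [|apply/asboolP].
- split => [/negP H Hg|H]; first by apply: H; apply/IH.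
  by apply/negP => /IH.
- split => [/implyP H Hg|H]; first by apply/IHk; apply: H; apply/IHg.
  by apply/implyP => /IHg Hg; apply/IHk; apply: H.
- by split => [/asboolP|?]; [|apply/asboolP].
- by split => [/asboolP|?]; [|apply/asboolP].
Qed.

Hypothesis reg : regular E.

Definition v0 : V E.
Proof.
have H : exists v : V E, True by case: (V_nonempty E) => v; exists v.
exact: (proj1_sig (cid H)).
Defined.
Definition any_profile C : profile E C := fun _ => v0.

Lemma soundE (phi : formula Agent) :
  derivable phi -> forall h : hist E, is_history h -> sat h phi.
Proof.
elim => {phi}.
- move=> f Ht h Hh; apply/peval_sat; exact: Ht.
- move=> C f h Hh /= H; apply: H => //; exact: heq_refl.
- move=> C f h Hh /= Hn h' Hh' Heq Hk; apply: Hn => h'' Hh'' Heq'.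
  apply: Hk => //; exact: heq_trans (heq_sym Heq) Heq'.
- move=> C f g h Hh /= H1 H2 h' Hh' Heq; exact: H1 h' Hh' Heq (H2 h' Hh' Heq).
- move=> C D f sub h Hh /= H h' Hh' Heq; apply: H => //; exact: heq_sub Heq.
- move=> C f h Hh /= [s Hs] h' Hh' Heq; exists s => h'' s' w' Hi Heq' Hag.
  apply: Hs => //; exact: heq_trans Heq Heq'.
- move=> C D f g disj h Hh /= [s1 H1] [s2 H2].
  pose prof := fun a (Ha : (C `|` D) a) =>
    match pselect (C a) with
    | left Ca => s1 (exist _ a Ca)
    | right nCa => s2 (exist _ a (or_ind (fun c => False_ind _ (nCa c)) id Ha))
    end.
  exists (fun x => prof (proj1_sig x) (proj2_sig x)).
  move=> h' s' w' Hi Heq Hag.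
  have HC : hequiv C h h' by apply: heq_sub Heq => a Ha; left.
  have HD : hequiv D h h' by apply: heq_sub Heq => a Ha; right.
  apply: (H1 h' s' w' Hi HC).
  + move=> a Ca; rewrite -(Hag a (or_introl Ca)) /prof /=.
    case: (pselect (C a)) => Ca' //; congr s1; exact/eq_exist.
  + apply: (H2 h' s' w' Hi HD) => a Da.
    rewrite -(Hag a (or_intror Da)) /prof /=.
    case: (pselect (C a)) => Ca.
      by exfalso; have : (C `&` D) a by []; rewrite disj.
    congr s2; exact/eq_exist.
- move=> f h Hh /= H; exists (any_profile (C:=set0)) => h' s' w' Hi _ _.
  apply: H => // a [].
- move=> C D f sub CN h Hh /= [s Hs]; exists s => h' s' w' Hi Heq Hag h'' Hh'' Heq'.
  have [c Cc] : exists c, C c.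
    apply: contrapT => Hn; apply: CN; apply/seteqP; split => x // Cx.
    by exfalso; apply: Hn; exists x.
  case: h'' Hh'' Heq' => [w''|g s'' w''] Hh'' Heq'.
    by have := Heq' c Cc.
  case: Hh'' => Hg HM.
  apply: Hs; first by split.
  + apply: heq_trans Heq _ => a Da; exact: (proj1 (Heq' a (sub a Da))).
  + move=> a Da; rewrite Hag; exact: (proj1 (proj2 (Heq' a (sub a Da)))).
- move=> C h Hh /= [s Hs].
  pose prof := fun a =>
    match pselect (C a) with
    | left Ca => s (exist _ a Ca)
    | right _ => v0
    end.
  have [w' Mw] := reg (hd h) prof.
  have Hag : prof_agree s prof.
    move=> a Ca; rewrite /prof; case: (pselect (C a)) => Ca' //.
    congr s; exact/eq_exist.
  by apply: (Hs h prof w') => //; try exact: heq_refl.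
- move=> C f _ IH h Hh /= h' Hh' _; exact: IH.
- move=> C f _ IH h Hh /=; exists (any_profile (C:=C)) => h' s' w' Hi _ _; exact: IH.
- move=> f g _ IH1 _ IH2 h Hh; exact: IH1 h Hh (IH2 h Hh).
Qed.
End S.

Theorem theorem1 (Agent : Type) (phi : formula Agent) :
  derivable phi ->
  forall (E : ETS Agent), regular E ->
  forall h : hist E, is_history h -> sat h phi.
Proof. by move=> H E reg; apply: soundE. Qed.
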